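(* For fixed $k \in \mathbb{N}$, fixed information resource $f$, and decomposable probability-of-success metric $\phi$, define \[ \tau = \{T \mid T \subseteq \Omega, |T| = k\}, \quad \tau_{q_{\text{min}}} = \{T \mid T \subseteq \Omega, |T| = k, \phi(T,f) \geq q_{\text{min}} \}. \] Then \[ \frac{|\tau_{q_{\text{min}}}|}{|\tau|} \leq \frac{p}{q_{\text{min}}}, \] where $p = \frac{k}{|\Omega|}$.
   Context: Algorithmic search framework: finite discrete search space $\Omega$, target sets $T\subseteq\Omega$ with indicator vectors $\mathbf{t}$, information resource $f$, and a fixed search algorithm. A probability-of-success metric $\phi$ is decomposable if there exists a probability vector $\mathbf{P}_{\phi,f}$ over $\Omega$, not a function of the target, with $\phi(t,f)=\mathbf{t}^{\top}\mathbf{P}_{\phi,f}=P_\phi(X\in t\mid f)$. $q_{\text{min}}\in(0,1]$ is a success threshold. *)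

(* Defs.v *)
From mathcomp Require Import all_boot all_order all_algebra.
Set Implicit Arguments. Unset Strict Implicit. Unset Printing Implicit Defensive.
Import Order.TTheory GRing.Theory Num.Theory.
Local Open Scope ring_scope.

Definition prob_vector (R : realFieldType) (Omega : finType) (P : Omega -> R) : Prop :=
  (forall x, 0 <= P x) /\ \sum_(x : Omega) P x = 1.

(* phi : targets -> information resources -> R is decomposable if for every
   information resource f there is a probability vector P_{phi,f}
   (independent of the target) with phi(t,f) = t^T P_{phi,f}. *)
Definition decomposable (R : realFieldType) (Omega F : finType)
    (phi : {set Omega} -> F -> R) : Prop :=
  forall f : F, exists P : Omega -> R,
    prob_vector P /\ forall T : {set Omega}, phi T f = \sum_(x in T) P x.

(* Main.v *)
Require Import Defs.
From mathcomp Require Import all_boot all_order all_algebra.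
From mathcomp Require Import all_fingroup ring.
Import Order.TTheory GRing.Theory Num.Theory.
Local Open Scope ring_scope.

Section Aux.
Variables (Omega : finType) (k : nat).

Definition cnt (x : Omega) : nat :=
  #|[set T : {set Omega} | (#|T| == k) && (x \in T)]|.

Lemma cnt_le x y : (cnt x <= cnt y)%N.
Proof.
rewrite /cnt.
set s := tperm x y.
have sinj : injective (fun z : Omega => s z) by apply: perm_inj.
rewrite -(card_imset _ (imset_inj sinj)).
apply: subset_leq_card; apply/subsetP => U /imsetP [T].
rewrite inE => /andP [/eqP HT xT] ->.
rewrite inE card_imset // HT eqxx /=.
have -> : y = s x by rewrite /s tpermL.
by rewrite mem_imset.
Qed.

Lemma cnt_eq x y : cnt x = cnt y.
Proof. by apply/eqP; rewrite eqn_leq !cnt_le. Qed.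

Lemma dbl (R : realFieldType) (g : Omega -> R) :
  \sum_(T in [set T : {set Omega} | #|T| == k]) \sum_(x in T) g x
  = \sum_x g x * (cnt x)%:R.
Proof.
rewrite (exchange_big_dep predT) //=.
apply: eq_bigr => x _.
rewrite /cnt -sumr_const mulr_sumr.
apply: eq_big => [T|T _]; last by rewrite mulr1.
by rewrite !inE.
Qed.
End Aux.
Arguments cnt {Omega} k x.
Arguments dbl {Omega} k {R} g.

Theorem theorem3 (R : realFieldType) (Omega F : finType)
    (phi : {set Omega} -> F -> R) (k : nat) (f : F) (qmin : R) :
  decomposable phi -> 0 < qmin -> qmin <= 1 ->
  (#|[set T : {set Omega} | (#|T| == k) && (qmin <= phi T f)]|%:R
     / #|[set T : {set Omega} | #|T| == k]|%:R)
  <= (k%:R / #|Omega|%:R) / qmin.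
Proof.
move=> /(_ f) [P [[P0 Psum] Phi]] q0 q1.
set S := [set T : {set Omega} | _ && _].
set A := [set T : {set Omega} | #|T| == k].
have [x0 _] : exists x0 : Omega, true.
  case: (pickP (@predT Omega)) => [x0 _|h]; first by exists x0.
  move: Psum; rewrite big_pred0 // => /eqP; by rewrite eq_sym oner_eq0.
set c := cnt k x0.
have hc : forall x : Omega, cnt k x = c by move=> x; exact: (cnt_eq Omega k x x0).
have hnc : (#|Omega| * c)%:R = (k * #|A|)%:R :> R.
  have := dbl k (fun _ : Omega => 1 : R).
  under eq_bigr => T TA do rewrite sumr_const.
  under [X in _ = X]eq_bigr => x _ do rewrite hc mul1r.
  rewrite sumr_const.
  have hT : forall T : {set Omega}, T \in A -> #|T| = k by move=> T; rewrite inE => /eqP.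
  under eq_bigr => T TA do rewrite (hT T TA).
  rewrite sumr_const => h.
  rewrite natrM mulrC natrM !mulr_natr h; congr (_ *+ _); exact: eq_card.
have hS : qmin * #|S|%:R <= c%:R.
  have -> : (c%:R : R) = \sum_(T in A) \sum_(x in T) P x.
    by rewrite dbl; under eq_bigr => x _ do rewrite hc; rewrite -mulr_suml Psum mul1r.
  have SA : S \subset A by apply/subsetP => T; rewrite !inE => /andP [].
  rewrite (big_setID S) /= (setIidPr SA) -[X in X <= _]addr0.
  apply: lerD; last by apply: sumr_ge0 => T _; apply: sumr_ge0.
  rewrite -sumr_const mulr_sumr ler_sum // => T; rewrite inE => /andP [_ ].
  by rewrite Phi mulr1.
have n0 : (0 < #|Omega|)%N by apply/card_gt0P; exists x0.
case: (posnP #|A|) => A0.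
  have : #|S| = 0%N.
    apply/eqP; rewrite -leqn0 -A0; apply: subset_leq_card.
    by apply/subsetP => T; rewrite !inE => /andP [].
  move=> ->; rewrite mul0r; apply: divr_ge0 => //; last exact: ltW.
  by apply: divr_ge0.
have Ap : (0 : R) < #|A|%:R by rewrite ltr0n.
have np : (0 : R) < #|Omega|%:R by rewrite ltr0n.
rewrite ler_pdivrMr //.
have e : (k%:R / #|Omega|%:R / qmin * #|A|%:R) = c%:R / qmin :> R.
  have hc' : (c%:R : R) = k%:R * #|A|%:R / #|Omega|%:R.
    by rewrite -natrM -hnc natrM; field; rewrite (lt0r_neq0 np).
  by rewrite hc'; field; rewrite (lt0r_neq0 np) (lt0r_neq0 q0).
by rewrite e ler_pdivlMr // mulrC.
Qed.
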